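(* Let $A, B, C, D \in \mathrm{SL}(2,\mathbb{R})$ and for integers $k, \ell$ let $M_{k,\ell} = D^\ell C B^k A$. Suppose $\mathrm{Tr}(B) = \mathrm{Tr}(D)$ and that for some integer $n \ge 0$, $$\mathrm{Tr}(M_{0,0}) = \mathrm{Tr}(B^n), \quad \mathrm{Tr}(M_{1,1}) = \mathrm{Tr}(B^{n+2}), \quad \mathrm{Tr}(M_{2,2}) = \mathrm{Tr}(B^{n+4}).$$ Then for all integers $k \ge 3$, $\mathrm{Tr}(M_{k,k}) = \mathrm{Tr}(B^{n+2k})$. *)

(* Defs.v *)
From mathcomp Require Import all_boot all_order all_algebra.
From mathcomp Require Import reals.
Set Implicit Arguments. Unset Strict Implicit. Unset Printing Implicit Defensive.
Import GRing.Theory Num.Theory.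
Local Open Scope ring_scope.

Definition SL2 (R : realType) (A : 'M[R]_2) : Prop := \det A = 1.

(* M_{k,l} = D^l C B^k A (nonnegative exponents suffice for the statement) *)
Definition Mkl (R : realType) (A B C D : 'M[R]_2) (k l : nat) : 'M[R]_2 :=
  D ^+ l *m C *m B ^+ k *m A.

(* Main.v *)
Require Import Defs.
From mathcomp Require Import all_boot all_order all_algebra.
From mathcomp Require Import reals ring lra.
Import GRing.Theory Num.Theory.
Local Open Scope ring_scope.

Ltac fixl := repeat match goal with
 | |- context [@lift 2 ?a ?b] =>
   first [ have -> : @lift 2 a b = 0 by apply/val_inj
         | have -> : @lift 2 a b = 1 by apply/val_inj ]
 | |- context [@ord0 1] => have -> : @ord0 1 = 0 by apply/val_inj
 end.

Lemma det22 (R : comNzRingType) (A : 'M[R]_2) : \det A = A 0 0 * A 1 1 - A 0 1 * A 1 0.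
Proof.
rewrite (expand_det_row _ 0) !big_ord_recl big_ord0 /cofactor !det_mx11 !mxE /=.
fixl. rewrite /bump /= expr0 expr1 addr0; ring.
Qed.

Lemma tr22 (R : comNzRingType) (A : 'M[R]_2) : \tr A = A 0 0 + A 1 1.
Proof. rewrite /mxtrace !big_ord_recl big_ord0 addr0. fixl. done. Qed.

Lemma CH2 (R : comNzRingType) (A : 'M[R]_2) : \det A = 1 -> A * A = \tr A *: A - 1.
Proof.
move=> dA; apply/matrixP => i j.
rewrite !mxE tr22 !big_ord_recl big_ord0 addr0.
move: dA; rewrite det22 => dA. fixl.
have o2 : forall k : 'I_2, k = 0 \/ k = 1.
  by case=> [[|[|k]] Hk]; [left; apply/val_inj|right; apply/val_inj|].
have [->|->] := o2 i; have [->|->] := o2 j; rewrite ?mxE /=.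
all: rewrite ?subr0 -?dA; ring.
Qed.

Fixpoint v (R : comNzRingType) (t : R) (k : nat) : R :=
  match k with
  | 0 => -1
  | 1 => 0
  | (k'.+1 as k1).+1 => t * v R t k1 - v R t k'
  end.
Arguments v {R}.

Lemma vSS (R : comNzRingType) (t : R) k : v t k.+2 = t * v t k.+1 - v t k.
Proof. by []. Qed.

Lemma v0prod (R : comNzRingType) k : v (0 : R) k.+1 * v 0 k = 0.
Proof.
elim: k => [|k IH]; first by rewrite /= mul0r.
by rewrite vSS mul0r sub0r mulNr mulrC IH oppr0.
Qed.

Lemma powE (R : comNzRingType) (B : 'M[R]_2) k : \det B = 1 ->
  B ^+ k = v (\tr B) k.+1 *: B - (v (\tr B) k)%:A.
Proof.
move=> dB; elim: k => [|k IH].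
  by rewrite expr0 /= scale0r sub0r scaleN1r opprK.
rewrite exprS IH mulrBr -scalerAr CH2 // mulr_algr vSS.
rewrite scalerBr scalerA scalerBl. 
apply/matrixP => i j; rewrite !mxE; ring.
Qed.

Lemma keytr (R : comNzRingType) (X Y Z W : 'M[R]_2) x y :
  \tr ((x *: X - y%:A) * Y * (x *: Z - y%:A) * W) =
  x ^+ 2 * \tr (X * Y * Z * W) - x * y * (\tr (X * Y * W) + \tr (Y * Z * W))
  + y ^+ 2 * \tr (Y * W).
Proof.
rewrite !mulrBl !mulrBr !mulrBl !mulr_algl !mulr_algr -!scalerAl -!scalerAr !scalerA.
rewrite !raddfB /= !mxtraceZ -!scalerAl !mxtraceZ; ring.
Qed.

Theorem lemma2p4 (R : realType) (A B C D : 'M[R]_2) (n : nat) :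
  SL2 A -> SL2 B -> SL2 C -> SL2 D ->
  \tr B = \tr D ->
  \tr (Mkl A B C D 0 0) = \tr (B ^+ n) ->
  \tr (Mkl A B C D 1 1) = \tr (B ^+ (n + 2)) ->
  \tr (Mkl A B C D 2 2) = \tr (B ^+ (n + 4)) ->
  forall k : nat, (3 <= k)%N -> \tr (Mkl A B C D k k) = \tr (B ^+ (n + 2 * k)).
Proof.
rewrite /SL2 => dA dB dC dD tBD.
set t := \tr B.
have hM : forall k, \tr (Mkl A B C D k k) =
   v t k.+1 ^+ 2 * \tr (D * C * B * A) - v t k.+1 * v t k * (\tr (D * C * A) + \tr (C * B * A))
   + v t k ^+ 2 * \tr (C * A).
  move=> k; rewrite /Mkl !mulmxE (powE _ _ k dB) (powE _ _ k dD) -/t -tBD keytr //.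
have hB : forall k, \tr (B ^+ (n + 2 * k)) =
   v t k.+1 ^+ 2 * \tr (B * B ^+ n * B * 1) - v t k.+1 * v t k * (\tr (B * B ^+ n * 1) + \tr (B ^+ n * B * 1))
   + v t k ^+ 2 * \tr (B ^+ n * 1).
  move=> k; rewrite -keytr -(powE _ _ k dB) mulr1 -!exprD; congr (\tr (B ^+ _)).
  by rewrite mulSn mul1n addnCA addnA addnC.
move=> H0 H1 H2 k _.
have G0 := hB 0%N; have G1 := hB 1%N; have G2 := hB 2%N.
rewrite muln0 addn0 in G0; rewrite muln1 in G1.
have E4 : (n + 4 = n + 2 * 2)%N by [].
rewrite E4 in H2.
rewrite hM G0 /= in H0; rewrite hM G1 /= in H1; rewrite hM G2 /= in H2.
move: H0 H1 H2.
set a := \tr (D * C * B * A); set b := (\tr (D * C * A) + \tr (C * B * A)).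
set c := \tr (C * A).
set a' := \tr (B * B ^+ n * B * 1); set b' := (\tr (B * B ^+ n * 1) + \tr (B ^+ n * B * 1)).
set c' := \tr (B ^+ n * 1).
move=> H0 H1 H2.
have Ec : c = c' by move: H0; rewrite !expr2; lra.
have Ea : a = a' by move: H1; rewrite !expr2; lra.
have Eb : t * b = t * b' by move: H2; rewrite !expr2 Ea Ec; lra.
rewrite hM hB -/a -/b -/c -/a' -/b' -/c' Ea Ec; congr (_ - _ + _).
have [t0|tn0] := eqVneq t 0.
  by rewrite t0 v0prod !mul0r.
by rewrite (mulfI tn0 Eb).
Qed.
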